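(* For every integer $n\ge 1$, the square of the path, $P_n^2$, is odd prime.
   Context: All graphs are finite and simple. A graph $G$ of order $N$ is odd prime if there is a bijection $\ell:V(G)\to\{1,3,\ldots,2N-1\}$ with $\gcd(\ell(u),\ell(v))=1$ for every edge $uv$. For a graph $G$ and $k\ge 1$, the power $G^k$ has vertex set $V(G)$, with $u\ne v$ adjacent iff their distance in $G$ is at most $k$. $P_n$ is the path on $n$ vertices. *)

(* Defs.v *)
From mathcomp Require Import all_boot.
Set Implicit Arguments. Unset Strict Implicit. Unset Printing Implicit Defensive.

(* A simple graph on a finite vertex type T: symmetric irreflexive relation. *)

Definition path_graph (n : nat) : rel 'I_n :=
  fun i j => (i.+1 == j :> nat) || (j.+1 == i :> nat).

Fixpoint walk_len (T : finType) (e : rel T) (m : nat) (u v : T) : bool :=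
  match m with
  | 0 => u == v
  | m'.+1 => [exists w, e u w && walk_len e m' w v]
  end.

Definition dist_le (T : finType) (e : rel T) (k : nat) (u v : T) : bool :=
  [exists m : 'I_k.+1, walk_len e m u v].

Definition graph_power (T : finType) (e : rel T) (k : nat) : rel T :=
  fun u v => (u != v) && dist_le e k u v.

Definition odd_labels (N : nat) : pred nat := fun m => odd m && (m < 2 * N).

Definition odd_prime (T : finType) (e : rel T) : Prop :=
  exists l : T -> nat,
    [/\ injective l,
        (forall x, odd_labels #|T| (l x)),
        (forall m, odd_labels #|T| m -> exists x, l x = m) &
        (forall u v, e u v -> coprime (l u) (l v))].

(* Main.v *)
Require Import Defs.
From mathcomp Require Import all_boot.
From mathcomp Require Import zify.

Lemma walk_bound n m (u v : 'I_n) :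
  walk_len (@path_graph n) m u v -> (v <= u + m) && (u <= v + m).
Proof.
elim: m u => [|m IH] u /=.
  by move=> /eqP ->; rewrite !addn0 !leqnn.
move=> /existsP [w /andP [huw /IH /andP [h1 h2]]].
move: huw; rewrite /path_graph => /orP [] /eqP H; apply/andP; split; lia.
Qed.

Lemma cop_step a k : odd a -> (k == 2) || (k == 4) -> coprime a (a + k).
Proof.
move=> oa /orP [] /eqP ->; rewrite /coprime gcdnDl -/(coprime a _).
  by rewrite coprimen2.
by rewrite (_ : 4 = 2 * 2) // coprimeMr coprimen2 oa.
Qed.

Theorem theorem5p1 (n : nat) : 1 <= n ->
  odd_prime (graph_power (@path_graph n) 2).
Proof.
move=> _.
exists (fun i : 'I_n => (2 * i).+1); split.
- by move=> i j /eqP; rewrite eqSS eqn_pmul2l // => /eqP /val_inj.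
- move=> x; rewrite /odd_labels card_ord /=.
  apply/andP; split; first by rewrite /= oddM. have := ltn_ord x. lia.
- move=> m; rewrite /odd_labels card_ord => /andP [om lm].
  have hm : m./2 < n by lia.
  exists (Ordinal hm) => /=.
  by rewrite -{2}(odd_double_half m) om -muln2 mulnC add1n.
- move=> u v /andP [neq /existsP [k /walk_bound /andP [h1 h2]]].
  have hk := ltn_ord k.
  have neq' : (u : nat) != v by apply: contra neq => /eqP /val_inj ->.
  have [uv|vu] := ltnP u v.
    have -> : (2 * v).+1 = (2 * u).+1 + (2 * (v - u)) by lia.
    apply: cop_step => /=; first by rewrite oddM.
    lia.
  rewrite coprime_sym.
  have -> : (2 * u).+1 = (2 * v).+1 + (2 * (u - v)) by lia.
  apply: cop_step => /=; first by rewrite oddM.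
  lia.
Qed.
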